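(* Let $\pi_n$ be a posterior density on $\Theta$, $f^*_{\hat\theta}$ a probability density symmetric about $\hat\theta\in\Theta$, and $$\mathcal{Q}=\{q_{\hat\theta}=2f^*_{\hat\theta}w_{\hat\theta}:\ w_{\hat\theta}(\theta)\in[0,1],\ w_{\hat\theta}(\theta)=1-w_{\hat\theta}(2\hat\theta-\theta)\ \forall\theta\}.$$ Then $q^*_{\hat\theta}=2f^*_{\hat\theta}w^*_{\hat\theta}\in\mathcal{Q}$ and $$q^*_{\hat\theta}\in\arg\min_{q_{\hat\theta}\in\mathcal{Q}}\mathcal{D}[\pi_n\,\|\,q_{\hat\theta}]$$ for every $\hat\theta\in\Theta$ and sample size $n$, where $\mathcal{D}$ is $\mathcal{D}_{TV}$ or any $\alpha$-divergence $\mathcal{D}_\alpha$, $\alpha\in\mathbb{R}\setminus\{0,1\}$.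
   Context: Posterior $\pi_n(\theta)=\pi(\theta)L(\theta;y_{1:n})/c(y_{1:n})$ on $\Theta\subseteq\mathbb{R}^d$, $\Theta$ symmetric about $\hat\theta$. Symmetric about $\hat\theta$ means $f(\theta)=f(2\hat\theta-\theta)$. Skewness-inducing factor: $w^*_{\hat\theta}(\theta)=\frac{\pi(\theta)L(\theta;y_{1:n})}{\pi(\theta)L(\theta;y_{1:n})+\pi(2\hat\theta-\theta)L(2\hat\theta-\theta;y_{1:n})}$, set to $1/2$ when numerator and denominator both vanish. $\mathcal{D}_{TV}[p\|q]=\tfrac12\int|p-q|$; $\mathcal{D}_\alpha[p\|q]=\frac{1}{\alpha(1-\alpha)}(1-\int p^\alpha q^{1-\alpha})$. *)

(* Defs.v *)
From HB Require Import structures.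
From mathcomp Require Import all_boot all_order all_algebra.
From mathcomp Require Import all_classical all_reals all_analysis.
Set Implicit Arguments.
Unset Strict Implicit.
Unset Printing Implicit Defensive.
Import Order.TTheory GRing.Theory Num.Theory.
Import numFieldNormedType.Exports.
Local Open Scope classical_set_scope.
Local Open Scope ring_scope.

(* Points of R^d are d-tuples of reals (with MathComp-Analysis' product
   Borel sigma-algebra on tuples). *)

(* Lebesgue integral over R^d of a nonnegative function, computed as the
   iterated one-dimensional Lebesgue integral (equal to the integral w.r.t.
   d-dimensional Lebesgue measure for nonnegative measurable f, by Tonelli). *)
Fixpoint iint (R : realType) (d : nat) : (d.-tuple R -> \bar R) -> \bar R :=
  match d return (d.-tuple R -> \bar R) -> \bar R with
  | 0 => fun f => f [tuple]
  | d'.+1 => fun f =>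
      (\int[@lebesgue_measure R]_x iint (fun t : d'.-tuple R => f (cons_tuple x t)))%E
  end.

Definition int_on (R : realType) (d : nat) (A : set (d.-tuple R))
  (f : d.-tuple R -> \bar R) : \bar R :=
  iint (fun t => if `[< A t >] then f t else 0%E).

Definition refl (R : realType) (d : nat) (th t : d.-tuple R) : d.-tuple R :=
  [tuple 2 * tnth th i - tnth t i | i < d].

Definition symmetric_set (R : realType) (d : nat) (th : d.-tuple R)
  (A : set (d.-tuple R)) : Prop :=
  forall t, A t -> A (refl th t).

Definition symmetric_fun (R : realType) (d : nat) (th : d.-tuple R)
  (A : set (d.-tuple R)) (f : d.-tuple R -> R) : Prop :=
  forall t, A t -> f t = f (refl th t).

Definition is_density (R : realType) (d : nat) (A : set (d.-tuple R))
  (p : d.-tuple R -> R) : Prop :=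
  [/\ measurable_fun A p, (forall t, A t -> 0 <= p t)
    & int_on A (fun t => (p t)%:E) = 1%E].

Definition epow (R : realType) (x a : R) : \bar R :=
  if x == 0 then (if a < 0 then +oo%E else if a == 0 then 1%E else 0%E)
  else (x `^ a)%:E.

Definition D_TV (R : realType) (d : nat) (A : set (d.-tuple R))
  (p q : d.-tuple R -> R) : \bar R :=
  ((2^-1)%:E * int_on A (fun t => `|p t - q t|%:E))%E.

Definition D_alpha (R : realType) (d : nat) (A : set (d.-tuple R)) (a : R)
  (p q : d.-tuple R -> R) : \bar R :=
  ((a * (1 - a))^-1%:E *
    (1 - int_on A (fun t => epow (p t) a * epow (q t) (1 - a))))%E.

Definition inQ (R : realType) (d : nat) (A : set (d.-tuple R)) (th : d.-tuple R)
  (f : d.-tuple R -> R) (q : d.-tuple R -> R) : Prop :=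
  exists w : d.-tuple R -> R,
    [/\ measurable_fun A w,
        (forall t, A t -> 0 <= w t <= 1),
        (forall t, A t -> w t = 1 - w (refl th t))
      & (forall t, A t -> q t = 2 * f t * w t)].

Definition post (R : realType) (d : nat) (Y : Type) (n : nat) (A : set (d.-tuple R))
  (pi : d.-tuple R -> R) (L : d.-tuple R -> ('I_n -> Y) -> R) (y : 'I_n -> Y)
  (t : d.-tuple R) : R :=
  pi t * L t y / fine (int_on A (fun s => (pi s * L s y)%:E)).

Definition wstar (R : realType) (d : nat) (Y : Type) (n : nat)
  (pi : d.-tuple R -> R) (L : d.-tuple R -> ('I_n -> Y) -> R) (y : 'I_n -> Y)
  (th t : d.-tuple R) : R :=
  let num := pi t * L t y in
  let den := pi t * L t y + pi (refl th t) * L (refl th t) y in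
  if (num == 0) && (den == 0) then 2^-1 else num / den.

(* Main.v *)
Require Import Defs.
From HB Require Import structures.
From mathcomp Require Import all_boot all_order all_algebra.
From mathcomp Require Import all_classical all_reals all_analysis.
From mathcomp Require Import measurable_realfun.
From mathcomp Require Import ring lra.
Import Order.TTheory GRing.Theory Num.Theory.
Import numFieldNormedType.Exports.
Local Open Scope classical_set_scope.
Local Open Scope ring_scope.

Section refl1.
Context {R : realType}.
Local Open Scope ereal_scope.

Lemma mrefl1 (c : R) : measurable_fun (T := measurableTypeR R) (U := measurableTypeR R) setT (fun x : R => c - x)%R.
Proof. exact: measurable_funB. Qed.

Lemma leb_reflE (c : R) A : measurable A ->
  pushforward (@lebesgue_measure R) (fun x : R => c - x)%R A = lebesgue_measure A.
Proof.
move=> mA.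
symmetry.
have := @lebesgue_measure_unique R (@measure_function_pushforward__canonical__measure_function_Measure _ _ _ (measurableTypeR R) _ lebesgue_measure _ (mrefl1 c)).
move=> H; rewrite -(H _ A mA) // => X [[a b] _ <-] /=.
rewrite /pushforward.
have -> : (fun x : R => c - x)%R @^-1` `]a, b]%classic = `[(c - b)%R, (c - a)%R[%classic.
  apply/seteqP; split => x /=; rewrite !in_itv /=.
    by move=> /andP[h1 h2]; apply/andP; split; [rewrite lerBlDr addrC -lerBlDr|rewrite ltrBrDl addrC -ltrBrDl].
  by move=> /andP[h1 h2]; apply/andP; split; [rewrite ltrBrDl addrC -ltrBrDl|rewrite lerBlDr addrC -lerBlDr].
rewrite !lebesgue_measure_itv /=.
rewrite !lte_fin (_ : (c - b < c - a)%R = (a < b)%R); last by rewrite ltrD2l ltrN2.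
by case: ifP => _ //; rewrite -!EFinD; congr (_%:E); lra.
Qed.

Lemma integral_refl1 (c : R) (F : R -> \bar R) : measurable_fun setT F ->
  (forall x, 0 <= F x) ->
  \int[lebesgue_measure]_x F (c - x)%R = \int[lebesgue_measure]_x F x.
Proof.
move=> mF F0.
have := @ge0_integral_pushforward _ _ (measurableTypeR R) (measurableTypeR R) R (fun x : R => c - x)%R (mrefl1 c) lebesgue_measure setT F measurableT mF (fun y _ => F0 y).
rewrite preimage_setT => <-.
apply: eq_measure_integral; [exact: mrefl1|move=> ? A mA _; exact: leb_reflE].
Qed.
End refl1.

Section iint_lemmas.
Context {R : realType}.
Local Open Scope ereal_scope.

Lemma iint_ge0 d (g : d.-tuple R -> \bar R) : (forall t, 0 <= g t) -> 0 <= iint g.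
Proof.
elim: d g => [|d IH] g g0 /=; first exact: g0.
by apply: integral_ge0 => x _; apply: IH => t.
Qed.

Lemma measurable_iint d dX (X : measurableType dX) (G : X * d.-tuple R -> \bar R) :
  measurable_fun setT G -> (forall z, 0 <= G z) ->
  measurable_fun setT (fun x => iint (fun t => G (x, t))).
Proof.
elim: d dX X G => [|d IH] dX X G mG G0 /=.
  apply: (measurableT_comp mG).
  exact: measurable_fun_pair.
pose H : (X * R)%type * d.-tuple R -> \bar R :=
  fun p => G (p.1.1, cons_tuple p.1.2 p.2).
have mH : measurable_fun setT H.
  apply: (measurableT_comp mG); apply: measurable_fun_pair.
    exact: (measurableT_comp measurable_fst measurable_fst).
  apply: measurable_cons.
    exact: (measurableT_comp measurable_snd measurable_fst).
  exact: measurable_snd.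
have := IH _ _ H mH (fun z => G0 _).
move=> mF.
have := @measurable_fun_fubini_tonelli_F _ _ X (measurableTypeR R) R lebesgue_measure _ mF.
apply.
move=> z; apply: iint_ge0 => t; exact: G0.
Qed.

Lemma measurable_cons2 d (g : d.+1.-tuple R -> \bar R) : measurable_fun setT g ->
  measurable_fun setT (fun p : R * d.-tuple R => g (cons_tuple p.1 p.2)).
Proof.
move=> mg; apply: (measurableT_comp mg); apply: measurable_cons.
  exact: measurable_fst.
exact: measurable_snd.
Qed.

Lemma measurable_cons1 d (g : d.+1.-tuple R -> \bar R) (x : R) : measurable_fun setT g ->
  measurable_fun setT (fun t : d.-tuple R => g (cons_tuple x t)).
Proof.
move=> mg; apply: (measurableT_comp mg); apply: measurable_cons => //.
Qed.

Lemma measurable_iint1 d (g : d.+1.-tuple R -> \bar R) : measurable_fun setT g ->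
  (forall t, 0 <= g t) ->
  measurable_fun setT (fun x : R => iint (fun t : d.-tuple R => g (cons_tuple x t))).
Proof.
move=> mg g0.
exact: (@measurable_iint d _ R (fun p : R * d.-tuple R => g (cons_tuple p.1 p.2)) (@measurable_cons2 d g mg) (fun z => g0 _)).
Qed.

Lemma iintD d (g h : d.-tuple R -> \bar R) :
  measurable_fun setT g -> measurable_fun setT h ->
  (forall t, 0 <= g t) -> (forall t, 0 <= h t) ->
  iint (fun t => g t + h t) = iint g + iint h.
Proof.
elim: d g h => [|d IH] g h mg mh g0 h0 //=.
rewrite -ge0_integralD //; last 4 first.
- by move=> x _; apply: iint_ge0.
- exact: measurable_iint1.
- by move=> x _; apply: iint_ge0.
- exact: measurable_iint1.
apply: eq_integral => x _.
by apply: IH => //; apply: measurable_cons1.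
Qed.

Lemma iint_le d (g h : d.-tuple R -> \bar R) :
  measurable_fun setT g -> measurable_fun setT h ->
  (forall t, 0 <= g t) -> (forall t, g t <= h t) ->
  iint g <= iint h.
Proof.
elim: d g h => [|d IH] g h mg mh g0 gh //=.
apply: ge0_le_integral => //.
- by move=> x _; apply: iint_ge0.
- exact: measurable_iint1.
- apply: measurable_iint1 => // t; exact: le_trans (g0 t) (gh t).
move=> x _; apply: IH => //; apply: measurable_cons1 => //.
Qed.

Lemma tnth_consS d (y : R) (u : d.-tuple R) (k : 'I_d) :
  tnth (cons_tuple y u) (lift ord0 k) = tnth u k.
Proof. exact: (tnthS y u k). Qed.

Lemma tnth_cons0 d (y : R) (u : d.-tuple R) : tnth (cons_tuple y u) ord0 = y.
Proof. exact: (tnth0 y u). Qed.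

Lemma refl_cons d (th : d.+1.-tuple R) (x : R) (t : d.-tuple R) :
  refl th (cons_tuple x t) = cons_tuple (2 * thead th - x)%R (refl [tuple of behead th] t).
Proof.
apply: eq_from_tnth => i; rewrite tnth_mktuple.
have E : th = cons_tuple (thead th) [tuple of behead th] by apply: (tuple_eta th).
case: (unliftP ord0 i) => [j ->|->].
  by rewrite !tnth_consS tnth_mktuple [in LHS]E tnth_consS.
by rewrite !tnth_cons0 [in LHS]E tnth_cons0.
Qed.

Lemma refl0 (th t : 0.-tuple R) : refl th t = t.
Proof. by rewrite (tuple0 t) (tuple0 (refl th [tuple])). Qed.

Lemma reflK d (th t : d.-tuple R) : refl th (refl th t) = t.
Proof.
apply: eq_from_tnth => i; rewrite !tnth_mktuple; lra.
Qed.

Lemma measurable_refl d (th : d.-tuple R) : measurable_fun setT (refl th).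
Proof.
apply/measurable_fun_tnthP => i.
rewrite (_ : _ \o _ = fun t : d.-tuple R => 2 * tnth th i - tnth t i)%R; last first.
  by apply/funext => t /=; rewrite tnth_mktuple.
apply: measurable_funB => //; exact: measurable_tnth.
Qed.

Lemma iint_refl d (th : d.-tuple R) (g : d.-tuple R -> \bar R) :
  measurable_fun setT g -> (forall t, 0 <= g t) ->
  iint (fun t => g (refl th t)) = iint g.
Proof.
elim: d th g => [|d IH] th g mg g0 /=.
  by rewrite refl0.
transitivity (\int[lebesgue_measure]_x iint (fun t : d.-tuple R => g (cons_tuple (2 * thead th - x)%R t))).
  apply: eq_integral => x _.
  rewrite -(IH [tuple of behead th] (fun s => g (cons_tuple (2 * thead th - x)%R s))); [|exact: measurable_cons1|by []].
  by congr iint; apply/funext => t; rewrite refl_cons.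
apply: (integral_refl1 (2 * thead th)%R (fun x => iint (fun t : d.-tuple R => g (cons_tuple x t))) (@measurable_iint1 d g mg g0)).
by move=> x; apply: iint_ge0.
Qed.
End iint_lemmas.

Section realineq.
Context {R : realType}.

Lemma powRK (x l : R) : 0 <= x -> l != 0 -> (x `^ l) `^ l^-1 = x.
Proof. by move=> x0 l0; rewrite -powRrM mulfV // powRr1. Qed.

Lemma holder2' (l u1 u2 v1 v2 : R) : 0 < l < 1 ->
  0 <= u1 -> 0 <= u2 -> 0 <= v1 -> 0 <= v2 ->
  u1 `^ l * v1 `^ (1 - l) + u2 `^ l * v2 `^ (1 - l) <=
  (u1 + u2) `^ l * (v1 + v2) `^ (1 - l).
Proof.
move=> /andP[l0 l1] u10 u20 v10 v20.
have l0' : l != 0 by rewrite gt_eqF.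
have l1' : 1 - l != 0 by rewrite subr_eq0 eq_sym lt_eqF.
have := @hoelder2 R (u1 `^ l) (u2 `^ l) (v1 `^ (1 - l)) (v2 `^ (1 - l)) l^-1 (1 - l)^-1.
rewrite !powR_ge0 !invrK !powRK //; apply => //.
- by rewrite invr_gt0.
- by rewrite invr_gt0 subr_gt0.
- by rewrite addrC subrK.
Qed.

Lemma rev_holder (a x1 x2 y1 y2 : R) : 1 < a ->
  0 <= x1 -> 0 <= x2 -> 0 <= y1 -> 0 <= y2 ->
  (y1 = 0 -> x1 = 0) -> (y2 = 0 -> x2 = 0) -> 0 < y1 + y2 ->
  (x1 + x2) `^ a * (y1 + y2) `^ (1 - a) <=
  x1 `^ a * y1 `^ (1 - a) + x2 `^ a * y2 `^ (1 - a).
Proof.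
move=> a1 x10 x20 y10 y20 h1 h2 c0.
have a0 : 0 < a by lra.
have a0' : a != 0 by rewrite gt_eqF.
set l := a^-1.
have l01 : 0 < l < 1 by rewrite invr_gt0 a0 /= invf_lt1.
have key : forall x y : R, 0 <= x -> 0 <= y -> (y = 0 -> x = 0) ->
    x = (x `^ a * y `^ (1 - a)) `^ l * y `^ (1 - l).
  move=> x y x0 y0 hxy.
  case: (eqVneq y 0) => [ye|yn0].
    rewrite ye hxy //.
    have l1 : 1 - l != 0 by rewrite subr_eq0 eq_sym lt_eqF //; case/andP: l01.
    by rewrite (@powR0 R (1 - l) l1) mulr0.
  have ypos : 0 < y by rewrite lt0r yn0.
  rewrite powRM ?powR_ge0 // powRK // -powRrM -mulrA -powRD; last first.
    by apply/implyP => _.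
  have -> : (1 - a) * l + (1 - l) = 0 by rewrite /l; field.
  by rewrite powRr0 mulr1.
set z1 := x1 `^ a * y1 `^ (1 - a).
set z2 := x2 `^ a * y2 `^ (1 - a).
have z10 : 0 <= z1 by rewrite mulr_ge0 ?powR_ge0.
have z20 : 0 <= z2 by rewrite mulr_ge0 ?powR_ge0.
have H := holder2' l z1 z2 y1 y2 l01 z10 z20 y10 y20.
rewrite -(key _ _ x10 y10 h1) -(key _ _ x20 y20 h2) in H.
have H2 : (x1 + x2) `^ a <= ((z1 + z2) `^ l * (y1 + y2) `^ (1 - l)) `^ a.
  apply: ge0_ler_powR => //; [exact: ltW|by rewrite nnegrE addr_ge0|by rewrite nnegrE mulr_ge0 ?powR_ge0].
rewrite powRM ?powR_ge0 // -!powRrM mulVf // powRr1 ?addr_ge0 // in H2.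
have cpos : 0 < (y1 + y2) `^ (1 - a) by rewrite powR_gt0.
rewrite -(ler_pM2r cpos) in H2.
apply: (le_trans H2); rewrite -mulrA -powRD; last by apply/implyP => _; rewrite gt_eqF.
have -> : (1 - l) * a + (1 - a) = 0 by rewrite /l; field.
by rewrite powRr0 mulr1.
Qed.
End realineq.

Section epow_lemmas.
Context {R : realType}.
Local Open Scope ereal_scope.

Lemma epow_ge0 (x a : R) : 0 <= epow x a.
Proof.
rewrite /epow; case: ifP => _; last by rewrite lee_fin powR_ge0.
by case: ifP => _ //; case: ifP.
Qed.

Lemma epow_pos (x a : R) : (0 < a)%R -> epow x a = (x `^ a)%:E.
Proof.
move=> a0; rewrite /epow; case: eqP => [->|//].
by rewrite ltNge (ltW a0) /= gt_eqF // powR0 // gt_eqF.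
Qed.

Lemma epow_xpos (x a : R) : (0 < x)%R -> epow x a = (x `^ a)%:E.
Proof. by move=> x0; rewrite /epow gt_eqF. Qed.

Lemma epow0_neg (a : R) : (a < 0)%R -> epow 0 a = +oo.
Proof. by move=> a0; rewrite /epow eqxx a0. Qed.

Lemma epow0_pos (a : R) : (0 < a)%R -> epow 0 a = 0.
Proof. by move=> a0; rewrite epow_pos // powR0 // gt_eqF. Qed.

Lemma calc_pow (S c v a : R) : (0 <= S)%R -> (0 <= c)%R -> (0 <= v)%R ->
  ((S * v) `^ a * (c * v) `^ (1 - a) = S `^ a * c `^ (1 - a) * v)%R.
Proof.
move=> S0 c0 v0; rewrite !powRM //.
rewrite mulrACA -powRD; last by rewrite addrC subrK oner_eq0.
by rewrite (_ : (a + (1 - a) = 1)%R) ?powRr1 //; ring.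
Qed.


Lemma pair_sum (S c ws a : R) : (0 <= S)%R -> (0 <= c)%R -> (0 <= ws <= 1)%R ->
  ((S * ws) `^ a * (c * ws) `^ (1 - a) + (S * (1 - ws)) `^ a * (c * (1 - ws)) `^ (1 - a)
   = S `^ a * c `^ (1 - a))%R.
Proof.
move=> S0 c0 /andP[w0 w1].
rewrite !calc_pow // ?subr_ge0 //; ring.
Qed.

Lemma alpha_pair_in (a x1 x2 c w ws : R) : (0 < a < 1)%R ->
  (0 <= x1)%R -> (0 <= x2)%R -> (0 <= c)%R -> (0 <= w <= 1)%R -> (0 <= ws <= 1)%R ->
  x1 = ((x1 + x2) * ws)%R -> x2 = ((x1 + x2) * (1 - ws))%R ->
  epow x1 a * epow (c * w) (1 - a) + epow x2 a * epow (c * (1 - w)) (1 - a) <=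
  epow x1 a * epow (c * ws) (1 - a) + epow x2 a * epow (c * (1 - ws)) (1 - a).
Proof.
move=> /andP[a0 a1] x10 x20 c0 /andP[w0 w1] ws01 hw1 hw2.
have b0 : (0 < 1 - a)%R by rewrite subr_gt0.
rewrite !epow_pos // -!EFinM -!EFinD lee_fin.
have -> : (x1 `^ a * (c * ws) `^ (1 - a) + x2 `^ a * (c * (1 - ws)) `^ (1 - a)
   = (x1 + x2) `^ a * c `^ (1 - a))%R.
  by rewrite -(pair_sum (x1 + x2) c ws a _ c0 ws01) ?addr_ge0 // -hw1 -hw2.
have := holder2' a x1 x2 (c*w) (c*(1-w)).
rewrite -mulrDr subrKC mulr1; apply => //; rewrite ?a0 ?a1 ?mulr_ge0 ?subr_ge0 //.
Qed.

Lemma Tws (a S c v x : R) : (a < 0 \/ 1 < a)%R -> (0 < S)%R -> (0 < c)%R ->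
  (0 <= v)%R -> x = (S * v)%R ->
  epow x a * epow (c * v) (1 - a) = (S `^ a * c `^ (1 - a) * v)%:E.
Proof.
move=> ha S0 c0 v0 ->.
have [->|vn0] := eqVneq v 0%R.
  rewrite !mulr0; case: ha => ha.
    by rewrite (epow0_pos (1 - a)) ?mule0 //; lra.
  by rewrite (epow0_pos a) ?mul0e //; lra.
have vpos : (0 < v)%R by rewrite lt0r vn0.
by rewrite !epow_xpos ?mulr_gt0 // -EFinM calc_pow // ltW.
Qed.

Lemma T_neg (a x y : R) : (a < 0)%R -> (0 <= x)%R -> (0 <= y)%R ->
  epow x a * epow y (1 - a) = +oo \/
  ((x = 0%R -> y = 0%R) /\ epow x a * epow y (1 - a) = (x `^ a * y `^ (1 - a))%:E).
Proof.
move=> a0 x0 y0.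
have b0 : (0 < 1 - a)%R by lra.
have [xz|xn] := eqVneq x 0%R.
  have [yz|yn] := eqVneq y 0%R.
    right; split => // ; rewrite xz yz (epow0_pos (1 - a)) // mule0 (@powR0 _ (1 - a)) ?mulr0 //; lra.
  by left; rewrite xz epow0_neg // epow_pos // gt0_mulye // lte_fin powR_gt0 // lt0r yn y0.
right; split => [xz|]; first by move: xn; rewrite xz eqxx.
by rewrite epow_xpos ?lt0r ?xn // epow_pos // -EFinM.
Qed.

Lemma T_pos (a x y : R) : (1 < a)%R -> (0 <= x)%R -> (0 <= y)%R ->
  epow x a * epow y (1 - a) = +oo \/
  ((y = 0%R -> x = 0%R) /\ epow x a * epow y (1 - a) = (x `^ a * y `^ (1 - a))%:E).
Proof.
move=> a1 x0 y0.
have a0 : (0 < a)%R by lra.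
have b0 : (1 - a < 0)%R by lra.
have [yz|yn] := eqVneq y 0%R.
  have [xz|xn] := eqVneq x 0%R.
    right; split => // ; rewrite xz yz (epow0_pos a) // mul0e (@powR0 _ a) ?mul0r //; lra.
  by left; rewrite yz epow0_neg // epow_pos // gt0_muley // lte_fin powR_gt0 // lt0r xn x0.
right; split => [yz|]; first by move: yn; rewrite yz eqxx.
by rewrite (epow_pos x) // (epow_xpos y) ?lt0r ?yn // -EFinM.
Qed.

Lemma neqNy_ge0 (x : \bar R) : 0 <= x -> x != -oo.
Proof. by case: x. Qed.

Lemma T_ge0 (a x y : R) : 0 <= epow x a * epow y (1 - a).
Proof. by rewrite mule_ge0 // epow_ge0. Qed.

Lemma alpha_pair_out (a x1 x2 c w ws : R) : (a < 0 \/ 1 < a)%R ->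
  (0 <= x1)%R -> (0 <= x2)%R -> (0 <= c)%R -> (0 <= w <= 1)%R -> (0 <= ws <= 1)%R ->
  x1 = ((x1 + x2) * ws)%R -> x2 = ((x1 + x2) * (1 - ws))%R ->
  epow x1 a * epow (c * ws) (1 - a) + epow x2 a * epow (c * (1 - ws)) (1 - a) <=
  epow x1 a * epow (c * w) (1 - a) + epow x2 a * epow (c * (1 - w)) (1 - a).
Proof.
move=> ha x10 x20 c0 /andP[w0 w1] /andP[ws0 ws1] hw1 hw2.
have [->|cn0] := eqVneq c 0%R; first by rewrite !mul0r.
have cpos : (0 < c)%R by rewrite lt0r cn0.
have [S0|Sn0] := eqVneq (x1 + x2)%R 0%R.
  have x1z : x1 = 0%R by lra.
  have x2z : x2 = 0%R by lra.
  rewrite x1z x2z; case: ha => [aneg|apos].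
    have [wpos|wle] := ltrP 0%R w.
      rewrite [X in _ <= X + _](_ : _ = +oo) ?addye ?leey //.
        exact: neqNy_ge0 (T_ge0 _ _ _).
      by rewrite epow0_neg // epow_xpos ?mulr_gt0 // gt0_mulye // lte_fin powR_gt0 // mulr_gt0.
    have wz : w = 0%R by lra.
    rewrite [X in _ <= _ + X](_ : _ = +oo) ?addey ?leey //.
      exact: neqNy_ge0 (T_ge0 _ _ _).
    by rewrite epow0_neg // epow_xpos ?wz ?subr0 ?mulr1 // gt0_mulye // lte_fin powR_gt0.
  by rewrite epow0_pos ?mul0e ?adde0 //; lra.
have Spos : (0 < x1 + x2)%R by rewrite lt0r Sn0 addr_ge0.
rewrite (Tws _ _ _ _ _ ha Spos cpos ws0 hw1) (Tws _ _ _ _ _ ha Spos cpos _ hw2) ?subr_ge0 //.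
rewrite -EFinD -mulrDr subrKC mulr1.
set y1 := (c * w)%R; set y2 := (c * (1 - w))%R.
have y10 : (0 <= y1)%R by rewrite mulr_ge0.
have y20 : (0 <= y2)%R by rewrite mulr_ge0 ?subr_ge0.
have cE : c = (y1 + y2)%R by rewrite /y1 /y2 -mulrDr subrKC mulr1.
case: ha => [aneg|apos].
  case: (T_neg _ _ _ aneg x10 y10) => [->|[h1 ->]].
    by rewrite addye ?leey // neqNy_ge0 // T_ge0.
  case: (T_neg _ _ _ aneg x20 y20) => [->|[h2 ->]].
    by rewrite addey ?leey.
  rewrite -EFinD lee_fin.
  have b1 : (1 < 1 - a)%R by lra.
  have := rev_holder _ _ _ _ _ b1 y10 y20 x10 x20 h1 h2 Spos.
  rewrite (_ : (1 - (1 - a) = a)%R); last by ring.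
  move=> H; rewrite -cE in H.
  by rewrite mulrC (mulrC (x1 `^ a)%R) (mulrC (x2 `^ a)%R).
case: (T_pos _ _ _ apos x10 y10) => [->|[h1 ->]].
  by rewrite addye ?leey // neqNy_ge0 // T_ge0.
case: (T_pos _ _ _ apos x20 y20) => [->|[h2 ->]].
  by rewrite addey ?leey.
rewrite -EFinD lee_fin cE.
apply: rev_holder => //.
by rewrite -cE.
Qed.
End epow_lemmas.

Section pairing.
Context {R : realType}.
Local Open Scope ereal_scope.

Lemma half_le (x y : \bar R) : x + x <= y + y -> x <= y.
Proof.
case: x => [s| |]; case: y => [r| |] //=; rewrite ?leey ?leNye //.
by rewrite -!EFinD !lee_fin => h; lra.
Qed.

Lemma measurable_mask d (A : set (d.-tuple R)) (F : d.-tuple R -> \bar R) :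
  measurable A -> measurable_fun A F ->
  measurable_fun setT (fun t => if `[< A t >] then F t else 0).
Proof. by move=> mA mF; exact: (proj1 (measurable_restrictT F mA) mF). Qed.

Lemma int_on_pair d (A : set (d.-tuple R)) (th : d.-tuple R) (F G : d.-tuple R -> \bar R) :
  measurable A -> symmetric_set th A ->
  measurable_fun A F -> measurable_fun A G ->
  (forall t, A t -> 0 <= F t) -> (forall t, A t -> 0 <= G t) ->
  (forall t, A t -> F t + F (refl th t) <= G t + G (refl th t)) ->
  int_on A F <= int_on A G.
Proof.
move=> mA sA mF mG F0 G0 FG.
rewrite /int_on.
set f := fun t => if `[< A t >] then F t else 0.
set g := fun t => if `[< A t >] then G t else 0.
have mf : measurable_fun setT f by exact: measurable_mask.
have mg : measurable_fun setT g by exact: measurable_mask.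
have f0 : forall t, 0 <= f t by move=> t; rewrite /f; case: asboolP => // /F0.
have g0 : forall t, 0 <= g t by move=> t; rewrite /g; case: asboolP => // /G0.
have Aiff : forall t, A (refl th t) <-> A t.
  move=> t; split => [|/sA //]; by move=> /sA; rewrite reflK.
have fg : forall t, f t + f (refl th t) <= g t + g (refl th t).
  move=> t; rewrite /f /g.
  case: (asboolP (A t)) => At.
    by rewrite asboolT ?Aiff //; exact: FG.
  by rewrite asboolF ?adde0 //; rewrite Aiff.
have mfr : measurable_fun setT (fun t => f (refl th t)) by exact: measurableT_comp mf (measurable_refl _ th).
have mgr : measurable_fun setT (fun t => g (refl th t)) by exact: measurableT_comp mg (measurable_refl _ th).
have H : iint f + iint f <= iint g + iint g.
  rewrite -{2}(iint_refl _ th _ mf f0) -{2}(iint_refl _ th _ mg g0).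
  rewrite -iintD // -iintD //.
  apply: iint_le => //.
  - by apply: emeasurable_funD.
  - by apply: emeasurable_funD.
  - by move=> t; rewrite adde_ge0.
exact: half_le H.
Qed.

Lemma tv_pair (p1 p2 c w ws : R) : (0 <= ws <= 1)%R ->
  p1 = ((p1 + p2) * ws)%R -> p2 = ((p1 + p2) * (1 - ws))%R ->
  (`|p1 - c * ws| + `|p2 - c * (1 - ws)| <= `|p1 - c * w| + `|p2 - c * (1 - w)|)%R.
Proof.
move=> /andP[ws0 ws1] h1 h2.
have -> : (p1 - c * ws = (p1 + p2 - c) * ws)%R by rewrite [in LHS]h1; ring.
have -> : (p2 - c * (1 - ws) = (p1 + p2 - c) * (1 - ws))%R by rewrite [in LHS]h2; ring.
rewrite !normrM (ger0_norm ws0) [`|1 - ws|%R]ger0_norm ?subr_ge0 // -mulrDr subrKC mulr1.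
have -> : (p1 + p2 - c = (p1 - c * w) + (p2 - c * (1 - w)))%R by ring.
exact: ler_normD.
Qed.

Lemma measurable_epow (a : R) : measurable_fun setT (fun x : R => epow x a).
Proof.
rewrite /epow; apply: measurable_fun_ifT.
- by apply: measurable_fun_eqr => //; exact: measurable_cst.
- exact: measurable_cst.
- by apply/measurable_EFinP; exact: measurable_powR.
Qed.
End pairing.

Theorem corollary1 (R : realType) (d : nat) (Theta : set (d.-tuple R))
  (Y : Type) (n : nat) (y : 'I_n -> Y)
  (pi : d.-tuple R -> R) (L : d.-tuple R -> ('I_n -> Y) -> R)
  (f : d.-tuple R -> R) (th : d.-tuple R) :
  measurable Theta -> Theta th -> symmetric_set th Theta ->
  measurable_fun Theta pi -> measurable_fun Theta (fun t => L t y) ->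
  (forall t, Theta t -> 0 <= pi t) -> (forall t, Theta t -> 0 <= L t y) ->
  (0 < int_on Theta (fun t => (pi t * L t y)%:E) < +oo)%E ->
  is_density Theta f -> symmetric_fun th Theta f ->
  let pin := post Theta pi L y in
  let qstar := fun t => 2 * f t * wstar pi L y th t in
  [/\ inQ Theta th f qstar,
      (forall q, inQ Theta th f q ->
         (D_TV Theta pin qstar <= D_TV Theta pin q)%E)
    & (forall a : R, a != 0 -> a != 1 -> forall q, inQ Theta th f q ->
         (D_alpha Theta a pin qstar <= D_alpha Theta a pin q)%E)].
Proof.
move=> mT Tth symT mpi mL pi0 L0 cb [mf f0 _] fsym pin qstar.
set P := fun t => pi t * L t y.
set cc := fine (int_on Theta (fun t => (pi t * L t y)%:E)).
have ccpos : 0 < cc by apply: fine_gt0.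
set ws := wstar pi L y th.
have pinE : forall t, pin t = P t / cc by [].
have wsE : forall t, ws t = if (P t == 0) && (P t + P (refl th t) == 0) then 2^-1
    else P t / (P t + P (refl th t)) by [].
have P0 : forall t, Theta t -> 0 <= P t by move=> t Tt; rewrite mulr_ge0 ?pi0 ?L0.
have Pr0 : forall t, Theta t -> 0 <= P (refl th t) by move=> t /symT; exact: P0.
have ws01 : forall t, Theta t -> 0 <= ws t <= 1.
  move=> t Tt; rewrite wsE; case: ifP => _; first by apply/andP; split; lra.
  have := P0 t Tt; have := Pr0 t Tt; set a := P t; set b := P (refl th t) => b0 a0.
  have [S0|Sn0] := eqVneq (a + b) 0; first by rewrite S0 invr0 mulr0 lexx ler01.
  have Spos : 0 < a + b by rewrite lt0r Sn0 addr_ge0.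
  by rewrite divr_ge0 ?addr_ge0 //= ler_pdivrMr // mul1r lerDl.
have wsrefl : forall t, Theta t -> ws (refl th t) = 1 - ws t.
  move=> t Tt; rewrite !wsE reflK.
  have := P0 t Tt; have := Pr0 t Tt; set a := P t; set b := P (refl th t) => b0 a0.
  rewrite (addrC b a).
  have [S0|Sn0] := eqVneq (a + b) 0.
    have az : a = 0 by lra.
    have bz : b = 0 by lra.
    by rewrite az bz addr0 eqxx /=; lra.
  rewrite andbF andbF; field => //.
have hw1 : forall t, Theta t -> pin t = (pin t + pin (refl th t)) * ws t.
  move=> t Tt; rewrite !pinE wsE.
  have := P0 t Tt; have := Pr0 t Tt; set a := P t; set b := P (refl th t) => b0 a0.
  have cc0 : cc != 0 by rewrite gt_eqF.
  have [S0|Sn0] := eqVneq (a + b) 0.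
    have az : a = 0 by lra.
    have bz : b = 0 by lra.
    by rewrite az bz !mul0r addr0 mul0r.
  rewrite andbF; field; by rewrite Sn0 cc0.
have hw2 : forall t, Theta t -> pin (refl th t) = (pin t + pin (refl th t)) * (1 - ws t).
  move=> t Tt; rewrite [LHS](hw1 _ (symT _ Tt)) reflK wsrefl //.
  by rewrite (addrC (pin (refl th t))).
have mP : measurable_fun Theta P by apply: measurable_funM.
have mpin : measurable_fun Theta pin.
  by apply: measurable_funM => //; exact: measurable_cst.
have mPr : measurable_fun Theta (fun t => P (refl th t)).
  apply: (measurable_comp mT _ mP).
    by move=> _ [t Tt <-]; exact: symT.
  exact: (measurable_funS measurableT (@subsetT _ Theta) (measurable_refl _ th)).
have mS : measurable_fun Theta (fun t => P t + P (refl th t)) by apply: measurable_funD.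
have mws : measurable_fun Theta ws.
  apply: (eq_measurable_fun (fun t => if P t + P (refl th t) == 0 then 2^-1
                                         else P t * (P t + P (refl th t)) `^ (-1))).
    move=> t; rewrite inE => Tt; rewrite wsE.
    have := P0 t Tt; have := Pr0 t Tt; set a := P t; set b := P (refl th t) => b0 a0.
    have [S0|Sn0] := eqVneq (a + b) 0.
      have az : a = 0 by lra.
      by rewrite az eqxx.
    by rewrite andbF powR_inv1 // addr_ge0.
  apply: measurable_fun_if => //.
  - apply: (measurable_fun_eqr (g := fun=> 0)) => //; exact: measurable_cst.
  - apply: (measurable_funS mT (@subIsetl _ _ _)).
    apply: measurable_funM => //.
    exact: (measurableT_comp (measurable_powR _) mS).
have mqs : measurable_fun Theta qstar.
  apply: measurable_funM => //; apply: measurable_funM => //; exact: measurable_cst.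
have hQ : inQ Theta th f qstar.
  exists ws; split => //.
  - by move=> t Tt; rewrite wsrefl ?symT //; lra.
have qsE : forall t, Theta t -> qstar t = 2 * f t * ws t /\ qstar (refl th t) = 2 * f t * (1 - ws t).
  by move=> t Tt; split => //; rewrite /qstar -fsym // -/ws wsrefl.
have qfacts : forall q, inQ Theta th f q -> measurable_fun Theta q /\
    exists w : d.-tuple R -> R, (forall t, Theta t -> 0 <= w t <= 1) /\
      (forall t, Theta t -> q t = 2 * f t * w t /\ q (refl th t) = 2 * f t * (1 - w t)).
  move=> q [w [mw w01 wr qE]]; split.
    apply: (eq_measurable_fun (fun t => 2 * f t * w t)).
      by move=> t; rewrite inE => Tt; rewrite qE.
    by apply: measurable_funM => //; apply: measurable_funM => //; exact: measurable_cst.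
  exists w; split => // t Tt; split; first exact: qE.
  rewrite qE; last exact: symT.
  by rewrite -(fsym t Tt) (wr t Tt); congr (_ * _); ring.
have pin0 : forall t, Theta t -> 0 <= pin t.
  by move=> t Tt; rewrite pinE divr_ge0 ?P0 // ltW.
have f0' : forall t, Theta t -> 0 <= 2 * f t by move=> t Tt; rewrite mulr_ge0 ?f0.
split => //.
- move=> q hq; rewrite /D_TV; apply: lee_wpmul2l; first by rewrite lee_fin invr_ge0.
  have [mq [w [w01 hqw]]] := qfacts q hq.
  apply: (@int_on_pair R d Theta th) => //.
  - apply/measurable_EFinP; apply: measurableT_comp; first exact: normr_measurable.
    exact: measurable_funB.
  - apply/measurable_EFinP; apply: measurableT_comp; first exact: normr_measurable.
    exact: measurable_funB.
  move=> t Tt; rewrite -!EFinD lee_fin.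
  case: (qsE t Tt) => -> ->; case: (hqw t Tt) => -> ->.
  by apply: tv_pair; [exact: ws01|exact: hw1|exact: hw2].
move=> a a0 a1 q hq.
have [mq [w [w01 hqw]]] := qfacts q hq.
rewrite /D_alpha.
set Fs := fun t => (epow (pin t) a * epow (qstar t) (1 - a))%E.
set Fq := fun t => (epow (pin t) a * epow (q t) (1 - a))%E.
have mFs : measurable_fun Theta Fs.
  exact: (emeasurable_funM (measurableT_comp (measurable_epow a) mpin) (measurableT_comp (measurable_epow (1 - a)) mqs)).
have mFq : measurable_fun Theta Fq.
  exact: (emeasurable_funM (measurableT_comp (measurable_epow a) mpin) (measurableT_comp (measurable_epow (1 - a)) mq)).
have Fs0 : forall t, Theta t -> (0 <= Fs t)%E by move=> t _; exact: T_ge0.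
have Fq0 : forall t, Theta t -> (0 <= Fq t)%E by move=> t _; exact: T_ge0.
have out : (a < 0 \/ 1 < a) ->
   (((a * (1 - a))^-1)%:E * (1 - int_on Theta Fs) <= ((a * (1 - a))^-1)%:E * (1 - int_on Theta Fq))%E.
  move=> ha.
  have H : (int_on Theta Fs <= int_on Theta Fq)%E.
    apply: (@int_on_pair R d Theta th) => // t Tt.
    rewrite /Fs /Fq; case: (qsE t Tt) => -> ->; case: (hqw t Tt) => -> ->.
    by apply: alpha_pair_out => //; [exact: pin0|apply: pin0; exact: symT|exact: f0'|exact: w01|exact: ws01|exact: hw1|exact: hw2].
  have kneg : (a * (1 - a))^-1 < 0.
    rewrite invr_lt0; case: ha => ha; [rewrite nmulr_rlt0|rewrite pmulr_rlt0]; lra.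
  rewrite -(opprK ((a * (1 - a))^-1)) EFinN !mulNe leeN2.
  apply: lee_wpmul2l; first by rewrite lee_fin oppr_ge0 ltW.
  exact: leeB (lexx _) H.
have [apos|aneg] := ltrP 0 a; last first.
  by apply: out; left; rewrite lt_neqAle a0 aneg.
have [alt1|age1] := ltrP a 1; last first.
  by apply: out; right; rewrite lt_neqAle eq_sym a1 age1.
have H : (int_on Theta Fq <= int_on Theta Fs)%E.
  apply: (@int_on_pair R d Theta th) => // t Tt.
  rewrite /Fs /Fq; case: (qsE t Tt) => -> ->; case: (hqw t Tt) => -> ->.
  by apply: alpha_pair_in => //; [rewrite apos alt1|exact: pin0|apply: pin0; exact: symT|exact: f0'|exact: w01|exact: ws01|exact: hw1|exact: hw2].
apply: lee_wpmul2l; first by rewrite lee_fin invr_ge0 mulr_ge0 // ?subr_ge0 ltW.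
exact: leeB (lexx _) H.
Qed.
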